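(* Let $k \in \mathbb{Z}_{\geq 0}$ and let $\gamma_X$ be a $(2k+2)$-DMS. Then $\operatorname{supp} H_k(\mathcal{R}^{\mathrm{lev}}(\gamma_X))$ is a convex subset of $\mathbf{Dyn}$, i.e. whenever $p \leq q \leq r$ in $\mathbf{Dyn}$ with $p, r$ in the support, also $q$ is in the support.
   Context: A dynamic metric space (DMS) $\gamma_X = (X, d_X(\cdot))$ is a finite set $X$ with a function $d_X : \mathbb{R} \times X \times X \to \mathbb{R}_{\geq 0}$ such that for each $t$, $d_X(t)$ is a pseudometric on $X$, and for each $x,x'$ the map $t \mapsto d_X(t)(x,x')$ is continuous. A $(2k+2)$-DMS is a DMS with $|X| = 2k+2$. For a compact interval $I \subset \mathbb{R}$, $d_X(I)(x,x') := \inf_{t \in I} d_X(t)(x,x')$ (a semimetric). For a semimetric $d$ on $X$ and $\delta \geq 0$, the Rips complex $\mathcal{R}_\delta(d)$ is the abstract simplicial complex on $X$ whose simplices are the finite nonempty $\sigma \subseteq X$ with $d(x,y) \leq \delta$ for all $x,y \in \sigma$. $\mathbf{Dyn}$ is the poset of pairs $(I,\delta)$ with $I$ a compact interval of $\mathbb{R}$ and $\delta \geq 0$, with $(I,\delta) \leq (I',\delta')$ iff $I \subseteq I'$ and $\delta \leq \delta'$. $\mathcal{R}^{\mathrm{lev}}(\gamma_X) : \mathbf{Dyn} \to \mathbf{Simp}$ sends $(I,\delta)$ to $\mathcal{R}_\delta(d_X(I))$ with inclusion maps, and $H_k(\mathcal{R}^{\mathrm{lev}}(\gamma_X))$ is its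 degree-$k$ simplicial homology over a fixed field $\mathbb{F}$. For this module every pointwise dimension is $0$ or $1$, and its support is the set of $p \in \mathbf{Dyn}$ where the vector space is nonzero. *)

(* Defs.v *)
From HB Require Import structures.
From mathcomp Require Import all_boot all_order all_algebra.
From mathcomp Require Import all_classical all_reals all_analysis.
Set Implicit Arguments. Unset Strict Implicit. Unset Printing Implicit Defensive.
Import Order.TTheory GRing.Theory Num.Theory.
Import numFieldNormedType.Exports.
Local Open Scope classical_set_scope.
Local Open Scope ring_scope.

Definition is_pseudometric (R : realType) (X : finType) (d : X -> X -> R) : Prop :=
  [/\ (forall x, d x x = 0), (forall x y, 0 <= d x y),
      (forall x y, d x y = d y x) & (forall x y z, d x z <= d x y + d y z)].

Definition is_DMS (R : realType) (X : finType) (d : R -> X -> X -> R) : Prop :=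
  (forall t, is_pseudometric (d t)) /\ (forall x y, continuous (fun t : R => d t x y)).

Definition dist_on (R : realType) (X : finType) (d : R -> X -> X -> R)
  (a b : R) (x y : X) : R :=
  inf [set d t x y | t in [set t : R | a <= t <= b]].

Definition rips (R : realType) (X : finType) (dd : X -> X -> R) (delta : R)
  : pred {set X} :=
  fun s => (s != finset.set0) && [forall x in s, forall y in s, dd x y <= delta].

(** Simplicial homology over a field F of a simplicial complex S on X
    (S given by its set of simplices), via chains indexed by {set X}. *)
Definition face_sign (F : fieldType) (X : finType) (s : {set X}) (v : X) : F :=
  (-1) ^+ #|[set u in s | (enum_rank u < enum_rank v)%N]|.

(** Boundary matrix d_k : C_k -> C_{k-1} (row-vector convention: row = k-simplex,
    column = (k-1)-simplex); k-simplices are simplices with k+1 vertices. *)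
Definition bd_mx (F : fieldType) (X : finType) (S : pred {set X}) (k : nat)
  : 'M[F]_(#|{set X}|) :=
  \matrix_(i, j)
    (let s := enum_val i in let t := enum_val j in
     if [&& S s, S t & #|s| == k.+1]
     then \sum_(v in s | t == (s :\ v)%SET) face_sign F s v else 0).

(** Projection onto the span of the k-simplices (the chain space C_k). *)
Definition chain_mx (F : fieldType) (X : finType) (S : pred {set X}) (k : nat)
  : 'M[F]_(#|{set X}|) :=
  \matrix_(i, j)
    (if (i == j) && S (enum_val i) && (#|enum_val i| == k.+1) then 1 else 0).

(** H_k(S; F) <> 0, i.e. the cycles Z_k = C_k ∩ ker d_k are not contained in the
    boundaries B_k = im d_{k+1}. *)
Definition Hk_nonzero (F : fieldType) (X : finType) (S : pred {set X}) (k : nat) : bool :=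
  ~~ ((chain_mx F S k :&: kermx (bd_mx F S k)) <= bd_mx F S k.+1)%MS.

Record dyn (R : realType) := Dyn { dyn_a : R; dyn_b : R; dyn_delta : R }.

Definition dyn_valid (R : realType) (p : dyn R) : Prop :=
  dyn_a p <= dyn_b p /\ 0 <= dyn_delta p.

Definition dyn_le (R : realType) (p q : dyn R) : Prop :=
  [/\ dyn_a q <= dyn_a p, dyn_b p <= dyn_b q & dyn_delta p <= dyn_delta q].

Definition in_supp (R : realType) (F : fieldType) (X : finType)
  (d : R -> X -> X -> R) (k : nat) (p : dyn R) : Prop :=
  Hk_nonzero F (rips (dist_on d (dyn_a p) (dyn_b p)) (dyn_delta p)) k.

(* Main.v *)
Require Import Defs.
From HB Require Import structures.
From mathcomp Require Import all_boot all_order all_algebra.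
From mathcomp Require Import all_classical all_reals all_analysis.
From mathcomp Require Import zify.
From mathcomp Require Import fintype finset bigop.
Set Implicit Arguments. Unset Strict Implicit. Unset Printing Implicit Defensive.
Import Order.TTheory GRing.Theory Num.Theory.
Local Open Scope ring_scope.

Section Comb.
Variables (F : fieldType) (X : finType).

Local Notation fs := (@face_sign F X).

Lemma fs_sq (t : {set X}) (v : X) : fs t v * fs t v = 1.
Proof. by rewrite /face_sign -expr2 sqrr_sign. Qed.

Lemma fs_neq0 (t : {set X}) (v : X) : fs t v != 0.
Proof. by rewrite /face_sign signr_eq0. Qed.

Lemma fs_self (t : {set X}) (v : X) : fs (v |: t) v = fs t v.
Proof.
rewrite /face_sign; congr (_ ^+ _); apply: eq_card => u.
rewrite !inE; case: (u =P v) => [->|] /=; by rewrite ?ltnn ?andbF.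
Qed.

Lemma fs_U (t : {set X}) (u v : X) : u \notin t ->
  fs (u |: t) v = (-1) ^+ (enum_rank u < enum_rank v)%N * fs t v.
Proof.
move=> ut; rewrite /face_sign -exprD; congr (_ ^+ _).
case: (boolP (enum_rank u < enum_rank v)%N) => h.
- idtac.
  have ->: [set w in u |: t | (enum_rank w < enum_rank v)%N] =
     u |: [set w in t | (enum_rank w < enum_rank v)%N].
    by apply/setP => w; rewrite !inE; case: (w =P u) => [->|] /=; rewrite ?h.
  by rewrite cardsU1 inE (negbTE ut).
- rewrite add0n; apply: eq_card => w; rewrite !inE.
  by case: (w =P u) => [->|] /=; rewrite ?(negbTE h) ?andbF.
Qed.

Lemma fs_swap (t : {set X}) (u v : X) : u != v -> u \notin t -> v \notin t ->
  fs (v |: t) u * fs (u |: t) v = - (fs t v * fs t u).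
Proof.
move=> uv ut vt; rewrite fs_U // fs_U //.
have : enum_rank u != enum_rank v by rewrite (inj_eq enum_rank_inj).
rewrite neq_ltn; case/orP => h.
- by rewrite h ltnNge ltnW //= expr0 expr1 mul1r mulN1r mulrN mulrC.
- by rewrite h ltnNge ltnW //= expr0 expr1 mul1r mulN1r mulNr mulrC.
Qed.

Definition bdc (c : {set X} -> F) (t : {set X}) : F :=
  \sum_(v | v \notin t) fs t v * c (v |: t).

Definition hc (v : X) (c : {set X} -> F) (s : {set X}) : F :=
  if v \in s then fs (s :\ v) v * c (s :\ v) else 0.

Lemma bdcD (c1 c2 : {set X} -> F) t : bdc (fun s => c1 s + c2 s) t = bdc c1 t + bdc c2 t.
Proof. by rewrite /bdc -big_split /=; apply: eq_bigr => v _; rewrite mulrDr. Qed.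

Lemma bdcB (c1 c2 : {set X} -> F) t : bdc (fun s => c1 s - c2 s) t = bdc c1 t - bdc c2 t.
Proof. by rewrite /bdc -sumrB /=; apply: eq_bigr => v _; rewrite mulrBr. Qed.

Lemma bdc_ext (c1 c2 : {set X} -> F) t : (forall s, c1 s = c2 s) -> bdc c1 t = bdc c2 t.
Proof. by move=> h; apply: eq_bigr => v _; rewrite h. Qed.

Lemma homotopy (v : X) (c : {set X} -> F) (t : {set X}) : bdc (hc v c) t = c t - hc v (bdc c) t.
Proof.
rewrite /hc; case: (boolP (v \in t)) => vt.
- set t' := t :\ v.
  have tE : t = v |: t' by rewrite setD1K.
  have vt' : v \notin t' by rewrite !inE eqxx.
  rewrite /bdc (bigD1 v vt') /= -tE.
  rewrite mulrDr mulrA fs_sq mul1r opprD addrA subrr add0r mulr_sumr -sumrN.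
  rewrite [in RHS](eq_bigl (fun u => u \notin t)); last first.
 by move=> u; rewrite !inE; case: (u =P v) => [->|] /=; rewrite ?vt ?andbF ?andbT.
  apply: eq_bigr => u ut.
  have uv : u != v by apply: contraNneq ut => ->.
  have ut' : u \notin t' by rewrite !inE negb_and uv.
  rewrite in_setU1 vt orbT.
  have -> : (u |: t) :\ v = u |: t'.
    by rewrite tE setUCA setU1K // in_setU1 negb_or eq_sym uv vt'.
  by rewrite tE mulrA fs_swap // mulNr mulrA.
- rewrite /bdc (bigD1 v) //= setU11 setU1K // mulrA fs_sq mul1r.
  rewrite big1 ?addr0 ?subr0 // => u /andP[ut uv].
  by rewrite in_setU1 eq_sym (negbTE uv) (negbTE vt) mulr0.
Qed.

Variable E : rel X.
Hypothesis Erefl : forall x, E x x.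
Hypothesis Esym : forall x y, E x y = E y x.

Definition clique (V s : {set X}) :=
  (s \subset V) && [forall x in s, forall y in s, E x y].
Definition supp_in (V : {set X}) (n : nat) (c : {set X} -> F) :=
  forall s, c s != 0 -> clique V s /\ #|s| = n.
Definition Zv (V : {set X}) (n : nat) :=
  forall c, supp_in V n c -> (forall t, bdc c t = 0) ->
  exists b, supp_in V n.+1 b /\ forall t, bdc b t = c t.

Lemma clique_sub (V W s : {set X}) : V \subset W -> clique V s -> clique W s.
Proof. by move=> VW /andP[sV cl]; rewrite /clique cl (subset_trans sV VW). Qed.

Lemma clique_U1 (V s : {set X}) v : v \in V -> (forall u, u \in s -> E v u) ->
  clique V s -> clique V (v |: s).
Proof.
move=> vV hv /andP[sV /forallP cl]; apply/andP; split.
  by rewrite subUset sub1set vV.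
apply/forallP => x; apply/implyP; rewrite in_setU1 => /orP[/eqP->|xs];
  apply/forallP => y; apply/implyP; rewrite in_setU1 => /orP[/eqP->|ys].
- exact: Erefl.
- exact: hv.
- by rewrite Esym; apply: hv.
- by move: (cl x); rewrite xs /= => /forallP /(_ y); rewrite ys.
Qed.

Lemma clique_E (V s : {set X}) x y : clique V s -> x \in s -> y \in s -> E x y.
Proof. by case/andP=> _ /forallP /(_ x) /implyP h xs ys; move/forallP: (h xs) => /(_ y); rewrite ys. Qed.

Lemma clique_V (V s : {set X}) x : clique V s -> x \in s -> x \in V.
Proof. by case/andP => /subsetP h _ /h. Qed.

Lemma clique_subs (V s s' : {set X}) : s' \subset s -> clique V s -> clique V s'.
Proof.
move=> ss cl; apply/andP; split; first by apply: subset_trans ss _; case/andP: cl.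
apply/forallP => x; apply/implyP => xs; apply/forallP => y; apply/implyP => ys.
by apply: (clique_E cl); apply: (subsetP ss).
Qed.

Lemma supp_hc (V W : {set X}) n v c : supp_in W n c -> v \in V -> W \subset V ->
  (forall u, u \in W -> E v u) -> supp_in V n.+1 (hc v c).
Proof.
move=> sc vV WV hv s; rewrite /hc; case: ifP => vs; last by rewrite eqxx.
move=> h; have cs : c (s :\ v) != 0 by apply: contraNneq h => ->; rewrite mulr0.
case: (sc _ cs) => cl sz; split; last by rewrite (cardsD1 v s) vs sz.
rewrite -(setD1K vs); apply: clique_U1 => //; last exact: clique_sub cl.
by move=> u us; apply: hv; apply: clique_V cl us.
Qed.

Lemma supp_add (V : {set X}) n (c1 c2 : {set X} -> F) : supp_in V n c1 -> supp_in V n c2 ->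
  supp_in V n (fun s => c1 s + c2 s).
Proof.
move=> h1 h2 s; case: (c1 s =P 0) => [->|/eqP ne _]; last exact: h1.
by rewrite add0r; apply: h2.
Qed.

Lemma supp_sub (V : {set X}) n (c1 c2 : {set X} -> F) : supp_in V n c1 -> supp_in V n c2 ->
  supp_in V n (fun s => c1 s - c2 s).
Proof.
move=> h1 h2 s; case: (c1 s =P 0) => [->|/eqP ne _]; last exact: h1.
by rewrite sub0r oppr_eq0; apply: h2.
Qed.

Lemma supp_mono (V W : {set X}) n (c : {set X} -> F) : V \subset W -> supp_in V n c -> supp_in W n c.
Proof. by move=> VW h s /h [cl sz]; split => //; apply: clique_sub cl. Qed.

Lemma cone_Z (V : {set X}) n v : v \in V -> (forall u, u \in V -> E v u) -> Zv V n.
Proof.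
move=> vV hv c sc cyc; exists (hc v c); split.
  exact: (supp_hc sc vV (subxx V) hv).
move=> t; rewrite homotopy /hc; case: ifP => _; last by rewrite subr0.
by rewrite cyc mulr0 subr0.
Qed.

Lemma hc_ext v (c1 c2 : {set X} -> F) s : (forall s, c1 s = c2 s) -> hc v c1 s = hc v c2 s.
Proof. by move=> h; rewrite /hc h. Qed.

Lemma step_Z (V : {set X}) n v : v \in V -> Zv [set u in V | (u != v) && E v u] n ->
  Zv (V :\ v) n.+1 -> Zv V n.+1.
Proof.
move=> vV IH1 IH2 c sc cyc.
set L := [set u in V | (u != v) && E v u].
pose a (t : {set X}) := if v \in t then 0 else fs t v * c (v |: t).
pose c1 (s : {set X}) := if v \in s then 0 else c s.
have F1 s : c s = c1 s + hc v a s.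
  rewrite /c1 /hc /a; case: ifP => vs; last by rewrite addr0.
  by rewrite add0r !inE eqxx /= setD1K // mulrA fs_sq mul1r.
have F2 t : bdc c t = bdc c1 t + (a t - hc v (bdc a) t).
  by rewrite (bdc_ext _ F1) bdcD homotopy.
have F3 (t : {set X}) : v \in t -> bdc c1 t = 0.
  move=> vt; rewrite /bdc big1 // => u _; rewrite /c1 in_setU1 vt orbT mulr0 //.
have F4 (t : {set X}) : bdc a t = 0.
  case: (boolP (v \in t)) => vt.
    rewrite /bdc big1 // => u _; rewrite /a in_setU1 vt orbT mulr0 //.
  have := F2 (v |: t); rewrite cyc F3 ?setU11 // add0r /a setU11 sub0r.
  rewrite /hc setU11 setU1K // => /eqP; rewrite eq_sym oppr_eq0 mulf_eq0.
  by rewrite (negbTE (fs_neq0 _ _)) /= => /eqP.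
have F5 (t : {set X}) : bdc c1 t + a t = 0.
  case: (boolP (v \in t)) => vt; first by rewrite F3 // /a vt addr0.
  by have := F2 t; rewrite cyc /hc (negbTE vt) subr0 => <-.
have sa : supp_in L n a.
  move=> t; rewrite /a; case: ifP => vt; first by rewrite eqxx.
  move=> h; have cs : c (v |: t) != 0 by apply: contraNneq h => ->; rewrite mulr0.
  case: (sc _ cs) => cl sz; split; last first.
    by move: sz; rewrite cardsU1 vt /= add1n => -[].
  apply/andP; split; last first.
    move/andP: (clique_subs (subsetUr [set v] t) cl) => [_ ->] //.
  apply/subsetP => u ut; rewrite inE (clique_V cl) ?in_setU1 ?ut ?orbT //=.
  apply/andP; split; first by apply: contraFneq vt => <-.
  by apply: (clique_E cl); rewrite in_setU1 ?eqxx ?ut ?orbT.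
have [b1 [sb1 hb1]] := IH1 a sa F4.
have LV : L \subset V :\ v.
  by apply/subsetP => u; rewrite !inE => /andP[-> /andP[-> _]].
pose c1' (s : {set X}) := c1 s + b1 s.
have sc1' : supp_in (V :\ v) n.+1 c1'.
  apply: supp_add; last exact: supp_mono sb1.
  move=> s; rewrite /c1; case: ifP => vs; first by rewrite eqxx.
  move=> /sc [cl sz]; split => //; apply/andP; split; last by case/andP: cl.
  apply/subsetP => u us; rewrite !inE (clique_V cl us) andbT.
  by apply: contraFneq vs => <-.
have cyc1 (t : {set X}) : bdc c1' t = 0 by rewrite bdcD hb1 F5.
have [b2 [sb2 hb2]] := IH2 c1' sc1' cyc1.
exists (fun s => b2 s - hc v b1 s); split.
  apply: supp_sub; first by apply: supp_mono sb2; apply: subD1set.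
  apply: (supp_hc sb1 vV); first by apply: subset_trans LV (subD1set V v).
  by move=> u; rewrite inE => /andP[_ /andP[_]].
move=> t; rewrite bdcB hb2 homotopy (hc_ext _ _ hb1) /c1' F1.
by rewrite opprB addrCA -addrA addrCA subrr addr0.
Qed.

Lemma Z_set0 n : Zv set0 n.+1.
Proof.
move=> c sc _; exists (fun _ => 0); split; first by move=> s; rewrite eqxx.
move=> t; rewrite /bdc big1 => [|u _]; last by rewrite mulr0.
case: (c t =P 0) => [//|/eqP/sc [cl sz]].
case/andP: cl => s0 _.
by move: s0; rewrite subset0 => /eqP s0; move: sz; rewrite s0 cards0.
Qed.

Lemma two_le (V : {set X}) v w : v \in V -> w \in V -> v != w -> (2 <= #|V|)%N.
Proof.
move=> vV wV vw; have <- : #|[set v; w]| = 2%N by rewrite cards2 vw.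
apply: subset_leq_card; by apply/subsetP => u; rewrite !inE => /orP[]/eqP->.
Qed.

Lemma card_L (V : {set X}) v w : v \in V -> w \in V -> v != w -> ~~ E v w ->
  (#|[set u in V | (u != v) && E v u]| + 2 <= #|V|)%N.
Proof.
move=> vV wV vw nE.
have sub : [set u in V | (u != v) && E v u] \subset V :\: [set v; w].
  apply/subsetP => u; rewrite !inE => /andP[uV /andP[uv Evu]].
  rewrite uV andbT negb_or uv /=.
  by apply: contraNneq nE => <-.
have := subset_leq_card sub; rewrite cardsD.
have -> : V :&: [set v; w] = [set v; w].
  by apply/setIidPr/subsetP => u; rewrite !inE => /orP[]/eqP->.
rewrite cards2 vw.
have := two_le vV wV vw; lia.
Qed.

Lemma vanish m : forall (V : {set X}) n, (#|V| <= m)%N -> (#|V| < (n.+1).*2)%N -> Zv V n.+1.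
Proof.
elim: m => [|m IH] V n hm hn.
  by move: hm; rewrite leqn0 cards_eq0 => /eqP ->; apply: Z_set0.
case: (set_0Vmem V) => [->|[v vV]]; first exact: Z_set0.
case: (boolP [forall u in V, E v u]) => [/forallP hall|].
  by apply: (cone_Z vV) => u uV; move: (hall u); rewrite uV.
rewrite negb_forall_in => /existsP [w /andP[wV nE]].
have vw : v != w by apply: contraNneq nE => <-; rewrite Erefl.
have cL := card_L vV wV vw nE.
case: n hn => [|n'] hn.
  by have := two_le vV wV vw; move: hn; rewrite /=; lia.
apply: (step_Z vV).
  apply: IH; lia.
apply: IH; move: (cardsD1 v V); rewrite vV /=; lia.
Qed.

Lemma keyZ (k : nat) : #|X| = (2 * k.+1 + 2)%N ->
  (exists x, (forall y, E x y) \/ exists y z, [/\ y != z, ~~ E x y & ~~ E x z]) ->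
  Zv setT k.+2.
Proof.
move=> cX [x [hall | [y [z [yz nxy nxz]]]]].
  by apply: (cone_Z (in_setT x)) => u _; apply: hall.
apply: (step_Z (in_setT x)).
  apply: (vanish (leqnn _)).
  have xy : x != y by apply: contraNneq nxy => <-; rewrite Erefl.
  have xz : x != z by apply: contraNneq nxz => <-; rewrite Erefl.
  set L := [set u in setT | (u != x) && E x u].
  have sub : L \subset setT :\: [set x; y; z].
    apply/subsetP => u; rewrite !inE => /andP[_ /andP[ux Exu]].
    rewrite !negb_or ux /= andbT; apply/andP; split; first by apply: contraNneq nxy => <-.
    by apply: contraNneq nxz => <-.
  have := subset_leq_card sub; rewrite cardsD setTI cardsT cX.
  rewrite [[set x; y; z]]setUC cardsU1 cards2 !inE negb_or xy /=.
  rewrite eq_sym xz eq_sym yz /=; lia.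
apply: (vanish (leqnn _)); move: (cardsD1 x setT); rewrite in_setT cardsT cX /=; lia.
Qed.

Lemma sum_I (f : {set X} -> F) :
  \sum_(i < #|{set X}|) f (enum_val i) = \sum_s f s.
Proof.
rewrite (reindex (@enum_rank _)) /=.
  by apply: eq_bigr => s _; rewrite enum_rankK.
by exists enum_val => i _; rewrite ?enum_valK ?enum_rankK.
Qed.

Lemma reidx1 (g : {set X} -> X -> F) (t : {set X}) :
  \sum_(s : {set X}) \sum_(v in s | t == s :\ v) g s v = \sum_(v | v \notin t) g (v |: t) v.
Proof.
rewrite (exchange_big_dep xpredT) //=.
rewrite [RHS]big_mkcond; apply: eq_bigr => v _.
case: (boolP (v \in t)) => vt.
  rewrite big_pred0 // => s /=; apply/negP => /andP[vs /eqP tE].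
  by move: vt; rewrite tE !inE eqxx.
rewrite (big_pred1 (v |: t)) // => s /=.
apply/idP/eqP => [/andP[vs /eqP ->]|->]; first by rewrite setD1K.
by rewrite setU11 setU1K // eqxx.
Qed.

Lemma reidx2 (h : {set X} -> F) (g : X -> F) (s : {set X}) :
  \sum_(t : {set X}) h t * \sum_(v in s | t == s :\ v) g v = \sum_(v in s) h (s :\ v) * g v.
Proof.
under eq_bigr => t _ do rewrite mulr_sumr.
rewrite (exchange_big_dep (fun v => v \in s)) /=; last by move=> t v _ /andP[].
apply: eq_bigr => v vs.
rewrite (big_pred1 (s :\ v)) // => t /=; rewrite vs /=.
by apply/eqP/eqP.
Qed.

Lemma mx_bd (S : pred {set X}) m (c : {set X} -> F) :
  (forall s, S s = (s != set0) && clique setT s) -> supp_in setT m.+2 c ->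
  forall j, ((\row_i c (enum_val i)) *m bd_mx F S m.+1) 0 j = bdc c (enum_val j).
Proof.
move=> HS sc j; rewrite mxE; set t := enum_val j.
pose f s := c s * (if [&& S s, S t & #|s| == m.+2]
                   then \sum_(v in s | t == s :\ v) fs s v else 0).
rewrite (eq_bigr (fun i => f (enum_val i))); last by move=> i _; rewrite !mxE.
rewrite sum_I /f; case: (boolP (S t)) => St.
  rewrite (eq_bigr (fun s : {set X} => \sum_(v in s | t == s :\ v) fs s v * c s)).
    by rewrite reidx1; apply: eq_bigr => v _; rewrite fs_self.
  move=> s _; case: (c s =P 0) => [->|/eqP/sc [cl sz]].
    by rewrite mul0r big1 // => v _; rewrite mulr0.
  have s0 : s != set0 by rewrite -card_gt0 sz.
  by rewrite HS s0 cl sz eqxx /= mulr_sumr; apply: eq_bigr => v _; rewrite mulrC.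
rewrite big1 => [|s _]; last by rewrite andbF /= mulr0.
apply/esym; rewrite /bdc big1 // => v vt.
case: (c (v |: t) =P 0) => [->|/eqP/sc [cl sz]]; first by rewrite mulr0.
exfalso; move/negP: St; apply; rewrite HS; apply/andP; split.
  by rewrite -card_gt0; move: sz; rewrite cardsU1 vt /= add1n => -[->].
exact: clique_subs (subsetUr [set v] t) cl.
Qed.

Lemma transfer (S : pred {set X}) k :
  (forall s, S s = (s != set0) && clique setT s) -> Zv setT k.+2 ->
  ~~ Hk_nonzero F S k.+1.
Proof.
move=> HS Z; rewrite /Hk_nonzero negbK; apply/rV_subP => u.
rewrite sub_capmx => /andP[uC uK].
pose c (s : {set X}) := u 0 (enum_rank s).
have urow : u = \row_i c (enum_val i) by apply/rowP => i; rewrite mxE /c enum_valK.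
have sc : supp_in setT k.+2 c.
  move=> s; rewrite /c -(mulmxKpV uC) mxE (bigD1 (enum_rank s)) //= big1 => [|i ij];
    last by rewrite [X in _ * X]mxE (negbTE ij) mulr0.
  rewrite [X in _ * X]mxE eqxx enum_rankK /=; case: ifP => [/andP[Ss /eqP sz] _|];
    last by rewrite mulr0 addr0 eqxx.
  by rewrite HS in Ss; case/andP: Ss.
have cyc t : bdc c t = 0.
  move/sub_kermxP: uK; rewrite urow => uK.
  move/matrixP: uK => /(_ 0 (enum_rank t)).
  by rewrite mx_bd // enum_rankK mxE.
have [b [sb hb]] := Z c sc cyc.
apply/submxP; exists (\row_i b (enum_val i)); apply/rowP => j.
by rewrite mx_bd // hb /c enum_valK.
Qed.

Lemma fs1 (a : X) : fs [set a] a = 1.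
Proof.
rewrite /face_sign; have -> : [set u in [set a] | (enum_rank u < enum_rank a)%N] = set0.
  by apply/setP => u; rewrite !inE; case: (u =P a) => [->|] /=; rewrite ?ltnn.
by rewrite cards0 expr0.
Qed.

Lemma sum_pair (a b : X) : a != b -> fs [set a; b] a + fs [set a; b] b = 0.
Proof.
move=> ab; rewrite {1}setUC fs_U ?inE 1?eq_sym // fs_U ?inE // !fs1 !mulr1.
have : enum_rank a != enum_rank b by rewrite (inj_eq enum_rank_inj).
rewrite neq_ltn; case/orP => h.
- rewrite h ltnNge ltnW //= expr0 expr1. exact: subrr.
- by rewrite h ltnNge ltnW //= expr0 expr1 addNr.
Qed.

Lemma H0_nz (S : pred {set X}) (x : X) :
  (forall s, S s = (s != set0) && clique setT s) -> Hk_nonzero F S 0.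
Proof.
move=> HS; apply/negP => /rV_subP h.
set r := enum_rank [set x].
pose u : 'rV[F]_#|{set X}| := delta_mx 0 r.
pose phi : 'cV[F]_#|{set X}| := \col_(j < #|{set X}|) (#|(enum_val j : {set X})| == 1%N)%:R.
have Sx : S [set x].
  rewrite HS -card_gt0 cards1 /=; apply/andP; split; first exact: subsetT.
  by apply/forallP => y; apply/implyP; rewrite inE => /eqP ->; apply/forallP => z;
     apply/implyP; rewrite inE => /eqP ->.
have uC : (u <= chain_mx F S 0)%MS.
  apply/submxP; exists u; apply/rowP => j.
  rewrite !mxE (bigD1 r) //= big1 => [|i ne]; last by rewrite !mxE (negbTE ne) mul0r.
  rewrite !mxE !eqxx /= mul1r addr0 /r enum_rankK Sx cards1 eqxx andbT [_ == j]eq_sym.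
  by case: (_ == _).
have uK : (u <= kermx (bd_mx F S 0))%MS.
  apply/sub_kermxP/rowP => j; rewrite !mxE (bigD1 r) //= big1 => [|i ne];
    last by rewrite !mxE (negbTE ne) mul0r.
  rewrite !mxE !eqxx /= mul1r addr0 /r enum_rankK.
  case: ifP => // /and3P[_ St _]; rewrite big1 // => v /andP[vx /eqP tE].
  by move: St; rewrite HS tE; move: vx; rewrite inE => /eqP ->; rewrite setDv eqxx.
have ub : (u <= bd_mx F S 1)%MS by apply: h; rewrite sub_capmx uC uK.
case/submxP: ub => w uw.
have bphi : bd_mx F S 1 *m phi = 0.
  apply/matrixP => i j'; rewrite !mxE; set s := enum_val i.
  pose f t := (if [&& S s, S t & #|s| == 2%N]
                then \sum_(v in s | t == s :\ v) fs s v else 0) * (#|t| == 1%N)%:R.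
  rewrite (eq_bigr (fun j => f (enum_val j))); last by move=> j _; rewrite !mxE.
  rewrite sum_I /f; case: (boolP (S s && (#|s| == 2%N))) => [/andP[Ss s2]|H]; last first.
    by rewrite big1 // => t _; rewrite (_ : [&& _, _ & _] = false) ?mul0r //;
       apply: contraNF H => /and3P[-> _ ->].
  rewrite (eq_bigr (fun t => (S t && (#|t| == 1%N))%:R * \sum_(v in s | t == s :\ v) fs s v)); last first.
    by move=> t _; rewrite Ss s2 /=; case: (S t); rewrite /= ?mul0r ?mulr0 // mulrC.
  rewrite reidx2.
  case/cards2P: s2 => a [b [ab sE]].
  have Hv v : v \in s -> (S (s :\ v) && (#|s :\ v| == 1%N))%:R = 1 :> F.
    move=> vs; have sz : #|s :\ v| = 1%N.
      by move: (cardsD1 v s); rewrite vs sE cards2 ab => -[].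
    rewrite sz eqxx andbT HS -card_gt0 sz /=.
    move: Ss; rewrite HS => /andP[_ cl].
    by rewrite (clique_subs _ cl) // subD1set.
  rewrite (eq_bigr (fun v => fs s v)); last by move=> v vs; rewrite Hv // mul1r.
  rewrite sE big_setU1 ?inE //= big_set1; exact: sum_pair.
have : u *m phi = w *m (bd_mx F S 1 *m phi) by rewrite uw mulmxA.
rewrite bphi mulmx0 => /matrixP /(_ 0 0); rewrite !mxE (bigD1 r) //= big1 => [|i ne];
  last by rewrite !mxE (negbTE ne) mul0r.
rewrite !mxE !eqxx /= mul1r addr0 /r enum_rankK cards1 eqxx => /eqP.
by rewrite oner_eq0.
Qed.

Lemma support_struct (S : pred {set X}) k :
  #|X| = (2 * k.+1 + 2)%N ->
  (forall s, S s = (s != set0) && clique setT s) -> Hk_nonzero F S k.+1 ->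
  forall x, (exists y, ~~ E x y) /\ (forall y z, ~~ E x y -> ~~ E x z -> y = z).
Proof.
move=> cX HS H x; split.
  apply/existsP; rewrite -negb_forall; apply/negP => /forallP hall.
  have := transfer HS (keyZ cX (ex_intro _ x (or_introl hall))).
  by rewrite H.
move=> y z nxy nxz; case: (eqVneq y z) => // yz.
have := transfer HS (keyZ cX (ex_intro _ x (or_intror (ex_intro _ y (ex_intro _ z (And3 yz nxy nxz)))))).
by rewrite H.
Qed.
End Comb.

Section Ana.
Variables (R : realType) (X : finType) (d : R -> X -> X -> R).
Hypothesis pm : forall t, is_pseudometric (d t).

Lemma dist_le (a b t : R) (x y : X) : a <= t <= b -> dist_on d a b x y <= d t x y.
Proof.
move=> ht; apply: ge_inf; last by exists t.
exists 0 => r [t' _ <-]; by case: (pm t') => _ ->.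
Qed.

Lemma dist_sym (a b : R) (x y : X) : dist_on d a b x y = dist_on d a b y x.
Proof.
rewrite /dist_on; have -> // : (fun t => d t x y) = (fun t => d t y x).
by apply: funext => t; case: (pm t) => _ _ ->.
Qed.

Lemma dist_mono (a b a' b' : R) (x y : X) : a' <= a -> b <= b' -> a <= b ->
  dist_on d a' b' x y <= dist_on d a b x y.
Proof.
move=> h1 h2 ab; apply: lb_le_inf; first by exists (d a x y); exists a => //=; rewrite lexx ab.
move=> r [t /andP[t1 t2] <-]; apply: dist_le.
by rewrite (le_trans h1 t1) (le_trans t2 h2).
Qed.

Lemma dist_self_le (a b delta : R) (x : X) : a <= b -> 0 <= delta -> dist_on d a b x x <= delta.
Proof.
move=> ab hd; apply: le_trans (dist_le x x (t := a) _) _; first by rewrite lexx ab.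
by case: (pm a) => -> _.
Qed.
End Ana.

Theorem mainTheorem2 (k : nat) (R : realType) (F : fieldType) (X : finType)
  (d : R -> X -> X -> R) :
  #|X| = (2 * k + 2)%N ->
  is_DMS d ->
  forall p q r : dyn R,
    dyn_valid p -> dyn_valid q -> dyn_valid r ->
    dyn_le p q -> dyn_le q r ->
    in_supp F d k p -> in_supp F d k r -> in_supp F d k q.
Proof.
move=> cX [pm _] p q r [apb dp] [aqb dq] [arb dr] [qp1 qp2 qp3] [rq1 rq2 rq3] hp hr.
pose Ep : rel X := fun x y => dist_on d (dyn_a p) (dyn_b p) x y <= dyn_delta p.
pose Eq : rel X := fun x y => dist_on d (dyn_a q) (dyn_b q) x y <= dyn_delta q.
pose Er : rel X := fun x y => dist_on d (dyn_a r) (dyn_b r) x y <= dyn_delta r.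
have reflq x : Eq x x by apply: dist_self_le.
have symq x y : Eq x y = Eq y x by rewrite /Eq dist_sym.
have reflp x : Ep x x by apply: dist_self_le.
have symp x y : Ep x y = Ep y x by rewrite /Ep dist_sym.
have reflr x : Er x x by apply: dist_self_le.
have symr x y : Er x y = Er y x by rewrite /Er dist_sym.
have HSq s : rips (dist_on d (dyn_a q) (dyn_b q)) (dyn_delta q) s =
             (s != set0) && clique Eq setT s by rewrite /rips /clique subsetT.
have HSp s : rips (dist_on d (dyn_a p) (dyn_b p)) (dyn_delta p) s =
             (s != set0) && clique Ep setT s by rewrite /rips /clique subsetT.
have HSr s : rips (dist_on d (dyn_a r) (dyn_b r)) (dyn_delta r) s =
             (s != set0) && clique Er setT s by rewrite /rips /clique subsetT.
have mpq x y : Ep x y -> Eq x y.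
  move=> h; apply: le_trans (le_trans h qp3); exact: dist_mono.
have mqr x y : Eq x y -> Er x y.
  move=> h; apply: le_trans (le_trans h rq3); exact: dist_mono.
case: k cX hp hr => [|k] cX hp hr.
  have : (0 < #|X|)%N by rewrite cX.
  case/card_gt0P => x _.
  exact: (H0_nz F reflq x HSq).
have Eqp x y : Eq x y = Ep x y.
  apply/idP/idP => [h|]; last exact: mpq.
  have [_ uq] := support_struct reflp symp cX HSp hp x.
  have [[z nz] _] := support_struct reflr symr cX HSr hr x.
  apply/negPn/negP => nxy.
  have nxz : ~~ Ep x z by apply: contra nz => /mpq /mqr.
  have yz := uq _ _ nxy nxz; subst z.
  by move: nz; rewrite (mqr _ _ h).
rewrite /in_supp.
have -> : rips (dist_on d (dyn_a q) (dyn_b q)) (dyn_delta q) =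
          rips (dist_on d (dyn_a p) (dyn_b p)) (dyn_delta p).
  apply: funext => s; rewrite /rips; congr (_ && _).
  apply: eq_forallb => x; congr (_ ==> _); apply: eq_forallb => y; congr (_ ==> _).
  exact: Eqp.
exact: hp.
Qed.
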